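(* Let $\mathcal{G}$ be a connected undirected graph on $n>1$ nodes, i.e. a symmetric, strongly connected digraph, with the uniform weights described in the context. If $\epsilon\in\big(0,(1-\tfrac1n)(2-\tfrac1n)\big)$, then the deterministic algorithm with parameter $\epsilon$ achieves average consensus.
   Context: Setting: $\mathcal{G}=(\mathcal{V},\mathcal{E})$ with $\mathcal{V}=\{1,\dots,n\}$ and no selfloops. Symmetric means that $(j,i)\in\mathcal{E}$ implies $(i,j)\in\mathcal{E}$. The degree of $\mathcal{G}$ is $d=\max_i|\{j:(j,i)\in\mathcal{E}\}|$. Weights: $a_{ij}=1/(2dn)$ if $(j,i)\in\mathcal{E}$ and $0$ otherwise. Also $b_{ih}=1/(dn)$ if $(i,h)\in\mathcal{E}$ and $0$ otherwise. Matrices: $L=D-A$, where $A=[a_{ij}]$ and $D=\mathrm{diag}(\sum_j a_{ij})$. $S=(I-\tilde D)+B$, where $B=[b_{ih}]^T$ and $\tilde D=\mathrm{diag}(\sum_h b_{ih})$. Also $M=\begin{bmatrix} I-L & \epsilon I\\ L & S-\epsilon I\end{bmatrix}$. Deterministic algorithm: $(x(k+1),s(k+1))^T=M(x(k),s(k))^T$ with $s(0)=0$. Average consensus: for every $x(0)\in\mathbb{R}^n$, $(x(k),s(k))\to(x_a\mathbf{1},0)$ where $x_a=\mathbf{1}^Tx(0)/n$. *)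

(* Defs.v *)
From HB Require Import structures.
From mathcomp Require Import all_boot all_order all_algebra.
From mathcomp Require Import all_classical all_reals all_analysis.
Set Implicit Arguments. Unset Strict Implicit. Unset Printing Implicit Defensive.
Import Order.TTheory GRing.Theory Num.Theory.
Local Open Scope ring_scope.
Local Open Scope classical_set_scope.
Import numFieldNormedType.Exports.

Section Consensus.
Variables (R : realType) (n : nat) (e : rel 'I_n).
(* e j i  means  (j,i) \in E *)

Definition no_selfloops := forall i, ~~ e i i.
Definition symmetric_graph := forall i j, e j i -> e i j.
Definition strongly_connected := forall i j, connect e i j.

Definition degree : nat := \max_(i : 'I_n) #|[set j | e j i]|.

Definition Amat : 'M[R]_n :=
  \matrix_(i, j) (if e j i then (2 * degree * n)%:R^-1 else 0).
Definition Dmat : 'M[R]_n := \matrix_(i, j) ((i == j)%:R * \sum_k Amat i k).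
Definition Lmat : 'M[R]_n := Dmat - Amat.

Definition bw (i h : 'I_n) : R := if e i h then (degree * n)%:R^-1 else 0.
Definition Bmat : 'M[R]_n := (\matrix_(i, h) bw i h)^T.
Definition Dtilde : 'M[R]_n := \matrix_(i, j) ((i == j)%:R * \sum_h bw i h).
Definition Smat : 'M[R]_n := (1%:M - Dtilde) + Bmat.

Definition Mmat (eps : R) : 'M[R]_(n + n) :=
  block_mx (1%:M - Lmat) (eps%:M) Lmat (Smat - eps%:M).

(* state (x(k), s(k)) stacked as a column vector, with s(0) = 0 *)
Definition state (eps : R) (x0 : 'cV[R]_n) (k : nat) : 'cV[R]_(n + n) :=
  iter k (fun z => Mmat eps *m z) (col_mx x0 0).
Definition xk (eps : R) (x0 : 'cV[R]_n) (k : nat) : 'cV[R]_n :=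
  usubmx (state eps x0 k).
Definition sk (eps : R) (x0 : 'cV[R]_n) (k : nat) : 'cV[R]_n :=
  dsubmx (state eps x0 k).

(* average consensus: x(k) -> x_a 1 and s(k) -> 0 (entrywise, equivalently
   in any norm on the finite-dimensional space) *)
Definition average_consensus (eps : R) : Prop :=
  forall x0 : 'cV[R]_n,
    let xa := (\sum_i x0 i 0) / n%:R in
    forall i : 'I_n,
      ((fun k => xk eps x0 k i 0) @ \oo --> xa) /\
      ((fun k => sk eps x0 k i 0) @ \oo --> (0 : R)).

End Consensus.

(* Main.v *)
Require Import Defs.
From HB Require Import structures.
From mathcomp Require Import all_boot all_order all_algebra.
From mathcomp Require Import all_classical all_reals all_analysis.
From mathcomp Require Import complex ring lra.
Import Order.TTheory GRing.Theory Num.Theory.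
Local Open Scope ring_scope.
Import numFieldNormedType.Exports.

Definition cre (R : Type) (z : complex R) : R := let: Complex a _ := z in a.
Definition cim (R : Type) (z : complex R) : R := let: Complex _ b := z in b.

Section RealSpectral.
Local Open Scope sesquilinear_scope.
Variable R : realType.
Local Notation Re := (@cre R).
Local Notation Im := (@cim R).

Let ReD (x y : complex R) : Re (x + y) = Re x + Re y. Proof. by case: x; case: y. Qed.
Let ImD (x y : complex R) : Im (x + y) = Im x + Im y. Proof. by case: x; case: y. Qed.
Let ReM (x y : complex R) : Re (x * y) = Re x * Re y - Im x * Im y.
Proof. by case: x; case: y. Qed.
Let ImM (x y : complex R) : Im (x * y) = Re x * Im y + Im x * Re y.
Proof. by case: x => a b; case: y => c d /=; rewrite addrC. Qed.
Let Re_sum (I : Type) (r : seq I) (F : I -> complex R) :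
  Re (\sum_(i <- r) F i) = \sum_(i <- r) Re (F i).
Proof. by apply: (big_morph _ ReD). Qed.
Let Im_sum (I : Type) (r : seq I) (F : I -> complex R) :
  Im (\sum_(i <- r) F i) = \sum_(i <- r) Im (F i).
Proof. by apply: (big_morph _ ImD). Qed.

Lemma real_spectral n (L : 'M[R]_n) : L^T = L ->
  exists (a b : 'M[R]_n) (p q : 'I_n -> R),
  [/\ (forall j i, \sum_k a j k * L k i = p j * a j i - q j * b j i),
      (forall j i, \sum_k b j k * L k i = q j * a j i + p j * b j i),
      (forall j, \sum_i (a j i ^+ 2 + b j i ^+ 2) = 1) &
      (forall i l, \sum_j (a j i * a j l + b j i * b j l) = (i == l)%:R)].
Proof.
move=> Lsym.
pose Lc := map_mx (real_complex R) L.
have Lct : Lc ^t* = Lc.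
  apply/matrixP => i j; rewrite !mxE.
  have -> : L j i = L i j by rewrite -{1}Lsym mxE.
  change (Complex (L i j) (- 0) = Complex (L i j) 0); by rewrite oppr0.
have nL : Lc \is normalmx by apply/normalmxP; rewrite Lct.
have hL := (orthomx_spectralP nL).
set U := spectralmx Lc in hL; set dd := spectral_diag Lc in hL.
have Uu : U \is unitarymx := spectral_unitarymx Lc.
have Uun : U \in unitmx := spectral_unit Lc.
have UL : U *m Lc = diag_mx dd *m U.
  by rewrite {1}hL !mulmxA mulmxV // mul1mx.
have UtU : U^t* *m U = 1%:M by rewrite -invmx_unitary // mulVmx.
have UUt : U *m U^t* = 1%:M by apply/unitarymxP.
exists (map_mx Re U), (map_mx Im U), (fun j => Re (dd 0 j)), (fun j => Im (dd 0 j)).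
split.
- move=> j i; have /matrixP /(_ j i) := UL.
  rewrite mul_diag_mx !mxE => /(congr1 Re).
  rewrite Re_sum ReM => <-; apply: eq_bigr => k _; rewrite !mxE ReM /=.
  by rewrite mulr0 subr0.
- move=> j i; have /matrixP /(_ j i) := UL.
  rewrite mul_diag_mx !mxE => /(congr1 Im).
  rewrite Im_sum ImM [RHS]addrC => <-; apply: eq_bigr => k _; rewrite !mxE ImM /=.
  by rewrite mulr0 add0r.
- move=> j; have /matrixP /(_ j j) := UUt.
  rewrite !mxE eqxx /= => /(congr1 Re).
  rewrite Re_sum /= => <-; apply: eq_bigr => k _; rewrite !mxE ReM.
  case: (U j k) => x y /=. by rewrite mulrN opprK !expr2.
- move=> i l; have /matrixP /(_ i l) := UtU.
  rewrite !mxE => /(congr1 Re).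
  have -> : Re ((i == l)%:R) = (i == l)%:R by case: (i == l).
  move=> <-. rewrite Re_sum; apply: eq_bigr => k _; rewrite !mxE ReM.
  case: (U k i) => x y; case: (U k l) => z w /=. by rewrite mulNr opprK.
Qed.
End RealSpectral.

Section Mode.
Local Open Scope classical_set_scope.
Variable R : realType.

Lemma two_step_cvg (m1 m2 : R) (z : nat -> R) :
  `|m1| < 1 -> `|m2| < 1 -> m1 != m2 ->
  (forall k, z k.+2 = (m1 + m2) * z k.+1 - m1 * m2 * z k) ->
  z @ \oo --> (0:R).
Proof.
move=> h1 h2 h12 hz.
have g1 : forall k, z k.+1 - m2 * z k = m1 ^+ k * (z 1%N - m2 * z 0%N).
  elim=> [|k IH]; first by rewrite expr0 mul1r.
  rewrite hz exprS; transitivity (m1 * (z k.+1 - m2 * z k)); first ring.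
  by rewrite IH mulrA.
have g2 : forall k, z k.+1 - m1 * z k = m2 ^+ k * (z 1%N - m1 * z 0%N).
  elim=> [|k IH]; first by rewrite expr0 mul1r.
  rewrite hz exprS; transitivity (m2 * (z k.+1 - m1 * z k)); first ring.
  by rewrite IH mulrA.
have d0 : m1 - m2 != 0 by rewrite subr_eq0.
have ze : z = (fun k => m1 ^+ k * ((z 1%N - m2 * z 0%N) / (m1 - m2)) -
                        m2 ^+ k * ((z 1%N - m1 * z 0%N) / (m1 - m2))).
  apply: funext => k; rewrite !mulrA -mulrBl -g1 -g2.
  apply: (mulIf d0); rewrite divfK //; ring.
rewrite ze.
have -> : (0:R) = 0 * ((z 1%N - m2 * z 0%N) / (m1 - m2)) -
                  0 * ((z 1%N - m1 * z 0%N) / (m1 - m2)) by rewrite !mul0r subr0.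
apply: cvgB; apply: cvgMl; exact: cvg_expr.
Qed.

Lemma mode_cvg (l ep : R) (u v : nat -> R) :
  0 < l -> l <= 2^-1 -> 0 < ep -> ep < (1 - l) * (2 - l) ->
  (forall k, u k.+1 = (1 - l) * u k + ep * v k) ->
  (forall k, v k.+1 = l * u k + (1 - 2 * l - ep) * v k) ->
  u @ \oo --> (0:R) /\ v @ \oo --> (0:R).
Proof.
move=> l0 l2 e0 el hu hv.
pose T := 2 - 3 * l - ep; pose D := 1 - 3 * l + 2 * l ^+ 2 - ep.
pose Dl := l ^+ 2 + ep ^+ 2 + 6 * l * ep.
have Dl0 : 0 < Dl by rewrite /Dl; nra.
pose s := Num.sqrt Dl.
have s0 : 0 < s by rewrite sqrtr_gt0.
have s2 : s ^+ 2 = Dl by rewrite sqr_sqrtr // ltW.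
pose m1 := (T + s) / 2; pose m2 := (T - s) / 2.
have sum12 : m1 + m2 = T by rewrite /m1 /m2; field.
have prod12 : m1 * m2 = D.
  rewrite /m1 /m2.
  have -> : (T + s) / 2 * ((T - s) / 2) = (T ^+ 2 - s ^+ 2) / 4 by field.
  by rewrite s2 /T /D /Dl; field.
have m1lt : m1 < 1.
  have : s < 3 * l + ep.
    have h : s ^+ 2 < (3 * l + ep) ^+ 2 by rewrite s2 /Dl; nra.
    nra.
  rewrite /m1 /T => h; lra.
have m2gt : -1 < m2.
  have : s < 4 - 3 * l - ep.
    have h : s ^+ 2 < (4 - 3 * l - ep) ^+ 2 by rewrite s2 /Dl; nra.
    have c0 : 0 < 4 - 3 * l - ep by nra.
    rewrite -subr_gt0; move: h; rewrite -subr_gt0 => h.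
    have -> : 4 - 3 * l - ep - s = ((4 - 3 * l - ep) ^+ 2 - s ^+ 2) / (4 - 3 * l - ep + s).
      by field; apply/lt0r_neq0; lra.
    by apply: divr_gt0 => //; lra.
  rewrite /m2 /T => h; lra.
have m12 : m2 < m1 by rewrite /m1 /m2; lra.
have a1 : `|m1| < 1 by rewrite ltr_norml; lra.
have a2 : `|m2| < 1 by rewrite ltr_norml; lra.
have n12 : m1 != m2 by rewrite gt_eqF.
have Hu := @two_step_cvg m1 m2 u a1 a2 n12.
have Hv := @two_step_cvg m1 m2 v a1 a2 n12.
split; [apply: Hu | apply: Hv] => k; rewrite sum12 prod12 /T /D.
- rewrite hu hv.
  have : ep * v k = u k.+1 - (1 - l) * u k by rewrite hu; ring.
  move=> h.
  transitivity ((1 - l) * u k.+1 + ep * l * u k + (1 - 2 * l - ep) * (ep * v k)); first ring.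
  rewrite h hu; ring.
- rewrite hv hu.
  have h : l * u k = v k.+1 - (1 - 2 * l - ep) * v k by rewrite hv; ring.
  transitivity ((1 - l) * (l * u k) + l * ep * v k + (1 - 2 * l - ep) * v k.+1); first ring.
  rewrite h hv; ring.
Qed.
End Mode.

Section Graph.
Variables (R : realType) (n : nat) (e : rel 'I_n).
Hypotheses (n1 : (1 < n)%N) (sym : symmetric_graph e) (conn : strongly_connected e).

Local Notation A := (Amat R e).
Local Notation L := (Lmat R e).
Local Notation d := (degree e).
Local Notation aw := ((2 * degree e * n)%:R^-1 : R).
Definition Dg i : R := \sum_k A i k.

Lemma memE (k i : 'I_n) : (k \in [set j | e j i]%classic) = e k i.
Proof. by apply/idP/idP => [/set_mem //|h]; apply: mem_set. Qed.

Lemma deg_pos : (0 < d)%N.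
Proof.
have n0 : (0 < n)%N by apply: ltnW.
pose i0 : 'I_n := Ordinal n0; pose i1 : 'I_n := Ordinal n1.
have /connectP [p pth lst] := conn i0 i1.
case: p pth lst => [|y p] /=; first by move=> _ /(congr1 val).
move=> /andP [ey _] _.
have h : (0 < #|[set j | e j y]%classic|)%N by apply/card_gt0P; exists i0; rewrite memE.
rewrite /degree; apply: (leq_trans h); exact: (leq_bigmax y).
Qed.

Lemma aw_gt0 : 0 < aw.
Proof. by rewrite invr_gt0 ltr0n !muln_gt0 deg_pos /= ltnW. Qed.

Lemma A_sym i j : A i j = A j i.
Proof.
rewrite !mxE; case: (boolP (e j i)) => h; first by rewrite sym.
by case: (boolP (e i j)) => // /sym; rewrite (negbTE h).
Qed.

Lemma A_ge0 i j : 0 <= A i j.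
Proof. by rewrite mxE; case: ifP => // _; exact: ltW aw_gt0. Qed.

Lemma L_entry i j : L i j = (i == j)%:R * Dg i - A i j.
Proof. by rewrite !mxE. Qed.

Lemma L_sym : L^T = L.
Proof.
apply/matrixP => i j; rewrite mxE !L_entry.
case: (eqVneq i j) => [->//|ne]; by rewrite !mul0r A_sym.
Qed.

Lemma L_sym' i j : L i j = L j i.
Proof. by rewrite -{1}L_sym mxE. Qed.

Lemma sum_delta (i : 'I_n) (F : 'I_n -> R) : \sum_k (i == k)%:R * F k = F i.
Proof.
rewrite (bigD1 i) //= eqxx mul1r big1 ?addr0 // => k /negbTE.
by rewrite eq_sym => ->; rewrite mul0r.
Qed.

Lemma sum_delta' (i : 'I_n) (F : 'I_n -> R) : \sum_k F k * (k == i)%:R = F i.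
Proof.
rewrite -(sum_delta i F); apply: eq_bigr => k _; by rewrite mulrC eq_sym.
Qed.

Lemma rowsum i : \sum_j L i j = 0.
Proof.
under eq_bigr do rewrite L_entry.
rewrite sumrB (sum_delta i (fun _ => Dg i)) subrr //.
Qed.

Lemma Dg_le i : Dg i <= (2 * n%:R)^-1.
Proof.
have -> : Dg i = aw *+ #|[set k | e k i]%classic|.
  rewrite -sumr_const big_mkcond /Dg; apply: eq_bigr => k _; by rewrite mxE memE.
have hd := @leq_bigmax _ (fun i => #|[set j | e j i]%classic|) i.
rewrite -[aw *+ _]mulr_natr.
apply: (@le_trans _ _ (aw * d%:R)); first by apply: ler_wpM2l; [exact: ltW aw_gt0 | rewrite ler_nat].
rewrite natrM natrM.
have d0 : (d%:R : R) != 0 by rewrite pnatr_eq0 -lt0n deg_pos.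
have n0 : (n%:R : R) != 0 by rewrite pnatr_eq0 -lt0n ltnW.
by rewrite le_eqVlt; apply/orP; left; apply/eqP; field; rewrite d0 n0.
Qed.

Definition bil (u v : 'I_n -> R) := \sum_i v i * \sum_k u k * L k i.

Lemma bil_sym u v : bil u v = bil v u.
Proof.
rewrite /bil.
under eq_bigr do rewrite mulr_sumr.
under [RHS]eq_bigr do rewrite mulr_sumr.
rewrite exchange_big /=; apply: eq_bigr => i _; apply: eq_bigr => k _.
by rewrite L_sym'; ring.
Qed.

Lemma sumL u i : \sum_k u k * L k i = u i * Dg i - \sum_k u k * A k i.
Proof.
under eq_bigr do rewrite L_entry mulrBr.
rewrite sumrB; congr (_ - _).
rewrite -(sum_delta' i (fun k => u k * Dg k)); apply: eq_bigr => k _; ring.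
Qed.

Lemma S1 v : \sum_i \sum_k A k i * v k ^+ 2 = \sum_i v i ^+ 2 * Dg i.
Proof.
rewrite exchange_big /=; apply: eq_bigr => i _.
by rewrite /Dg mulr_sumr; apply: eq_bigr => k _; rewrite mulrC.
Qed.

Lemma S2 v : \sum_i \sum_k A k i * v i ^+ 2 = \sum_i v i ^+ 2 * Dg i.
Proof.
apply: eq_bigr => i _.
by rewrite /Dg mulr_sumr; apply: eq_bigr => k _; rewrite mulrC A_sym.
Qed.

Lemma qf_identity v : 2 * bil v v = \sum_i \sum_k A k i * (v k - v i) ^+ 2.
Proof.
have hb : bil v v = \sum_i v i ^+ 2 * Dg i - \sum_i \sum_k v i * (v k * A k i).
  rewrite /bil; under eq_bigr do rewrite sumL mulrBr.
  rewrite sumrB; congr (_ - _); apply: eq_bigr => i _; [ring | by rewrite mulr_sumr].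
have hr : \sum_i \sum_k A k i * (v k - v i) ^+ 2 =
   \sum_i \sum_k A k i * v k ^+ 2 + \sum_i \sum_k A k i * v i ^+ 2
   - 2 * \sum_i \sum_k v i * (v k * A k i).
  transitivity (\sum_i (\sum_k A k i * v k ^+ 2 + \sum_k A k i * v i ^+ 2
                        - 2 * \sum_k v i * (v k * A k i))).
    apply: eq_bigr => i _; rewrite mulr_sumr -big_split -sumrB /=.
    by apply: eq_bigr => k _; ring.
  by rewrite sumrB big_split /= mulr_sumr.
rewrite hb hr S1 S2; ring.
Qed.

Lemma qf_ge0 v : 0 <= bil v v.
Proof.
have : 0 <= 2 * bil v v.
  rewrite qf_identity; apply: sumr_ge0 => i _; apply: sumr_ge0 => k _.
  by apply: mulr_ge0; [exact: A_ge0 | exact: sqr_ge0].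
lra.
Qed.

Lemma qf_le v : bil v v <= n%:R^-1 * \sum_i v i ^+ 2.
Proof.
have h : 2 * bil v v <= 4 * \sum_i v i ^+ 2 * Dg i.
  rewrite qf_identity.
  apply: (@le_trans _ _ (\sum_i \sum_k (2 * (A k i * v k ^+ 2) + 2 * (A k i * v i ^+ 2)))).
    apply: ler_sum => i _; apply: ler_sum => k _.
    have a0 := A_ge0 k i.
    have := mulr_ge0 a0 (sqr_ge0 (v k + v i)).
    rewrite !expr2; nra.
  under eq_bigr do rewrite big_split /=.
  rewrite big_split /=.
  under eq_bigr do rewrite -mulr_sumr.
  under [X in _ + X <= _]eq_bigr do rewrite -mulr_sumr.
  rewrite -!mulr_sumr S1 S2; lra.
have h2 : \sum_i v i ^+ 2 * Dg i <= (2 * n%:R)^-1 * \sum_i v i ^+ 2.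
  rewrite mulr_sumr; apply: ler_sum => i _; rewrite mulrC.
  by apply: ler_wpM2r; [exact: sqr_ge0 | exact: Dg_le].
have n0 : (0 : R) < n%:R by rewrite ltr0n ltnW.
rewrite invfM in h2.
move: h h2; set X := \sum_i v i ^+ 2 * Dg i; set Y := \sum_i v i ^+ 2.
set ni := (n%:R : R)^-1 => h h2. lra.
Qed.

Lemma qf0_const v : bil v v = 0 -> forall i j, v i = v j.
Proof.
move=> h0.
have h : \sum_i \sum_k A k i * (v k - v i) ^+ 2 = 0 by rewrite -qf_identity h0 mulr0.
have nn : forall i k, true -> 0 <= A k i * (v k - v i) ^+ 2.
  by move=> i k _; apply: mulr_ge0; [exact: A_ge0 | exact: sqr_ge0].
have hi : forall i, \sum_k A k i * (v k - v i) ^+ 2 = 0.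
  move=> i; apply: (psumr_eq0P _ h) => // i' _.
  by apply: sumr_ge0 => k _; exact: nn.
have hik : forall i k, e i k -> v k = v i.
  move=> i k eik.
  have := @psumr_eq0P _ _ _ _ (nn i) (hi i) k isT.
  rewrite mxE eik => /eqP; rewrite mulf_eq0 invr_eq0 pnatr_eq0 sqrf_eq0 subr_eq0.
  case/orP => [/eqP hz|/eqP //].
  have : (0 < 2 * degree e * n)%N by rewrite !muln_gt0 deg_pos (ltnW n1).
  by rewrite hz.
move=> i j; have /connectP [p pth ->] := conn i j.
elim: p i pth => [//|y p IH] i /= /andP [eiy pth].
by rewrite -(IH y pth) (hik _ _ eiy).
Qed.

End Graph.

Section Main.
Local Open Scope classical_set_scope.
Variables (R : realType) (n : nat) (e : rel 'I_n) (eps : R).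
Hypotheses (n1 : (1 < n)%N) (sym : symmetric_graph e) (conn : strongly_connected e).
Hypotheses (eps0 : 0 < eps) (epsb : eps < (1 - n%:R^-1) * (2 - n%:R^-1)).

Local Notation A := (Amat R e).
Local Notation L := (Lmat R e).
Local Notation aw := ((2 * degree e * n)%:R^-1 : R).

Local Notation Asym := (@A_sym R n e sym).
Local Notation degpos := (@deg_pos n e n1 conn).
Local Notation Lentry := (@L_entry R n e).
Local Notation Dgi := (@Dg R n e).
Local Notation rsum := (@rowsum R n e).
Local Notation Lsym := (@L_sym R n e sym).
Local Notation Lsym' := (@L_sym' R n e sym).
Local Notation bilL := (@bil R n e).
Local Notation bilsym := (@bil_sym R n e sym).
Local Notation qfle := (@qf_le R n e n1 sym conn).
Local Notation qfge0 := (@qf_ge0 R n e sym).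
Local Notation qf0 := (@qf0_const R n e n1 sym conn).

Lemma esym i j : e i j = e j i.
Proof. by apply/idP/idP => /sym. Qed.

Lemma bw_A i h : bw R e i h = 2 * A i h.
Proof.
rewrite /bw mxE esym; case: ifP => _; last by rewrite mulr0.
have d0 : (degree e)%:R != 0 :> R by rewrite pnatr_eq0 -lt0n degpos.
have n0 : (n%:R : R) != 0 by rewrite pnatr_eq0 -lt0n ltnW.
by rewrite !natrM; field; rewrite d0 n0.
Qed.

Lemma S_eq : Smat R e = 1%:M - 2 *: L.
Proof.
have hs : forall i, \sum_h bw R e i h = 2 * Dgi i.
  by move=> i; rewrite /Dg mulr_sumr; apply: eq_bigr => h _; exact: bw_A.
apply/matrixP => i j; rewrite !mxE hs bw_A Asym [A i j]mxE /Dg; ring.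
Qed.

Variable x0 : 'cV[R]_n.
Local Notation X k := (xk e eps x0 k).
Local Notation Sv k := (sk e eps x0 k).

Lemma state_eq k : state e eps x0 k = col_mx (X k) (Sv k).
Proof. by rewrite /xk /sk vsubmxK. Qed.

Lemma X0 : X 0 = x0.
Proof. by rewrite /xk /= col_mxKu. Qed.
Lemma S0 : Sv 0 = 0.
Proof. by rewrite /sk /= col_mxKd. Qed.

Lemma eD (M N : 'cV[R]_n) i : (M + N) i 0 = M i 0 + N i 0.
Proof. by rewrite mxE. Qed.
Lemma eB (M N : 'cV[R]_n) i : (M - N) i 0 = M i 0 - N i 0.
Proof. by rewrite !mxE. Qed.
Lemma eZ (c : R) (M : 'cV[R]_n) i : (c *: M) i 0 = c * M i 0.
Proof. by rewrite mxE. Qed.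
Lemma eM (M : 'M[R]_n) (N : 'cV[R]_n) i : (M *m N) i 0 = \sum_l M i l * N l 0.
Proof. by rewrite mxE. Qed.

Lemma XS k i : X k.+1 i 0 = X k i 0 - \sum_l L i l * X k l 0 + eps * Sv k i 0.
Proof.
rewrite {1}/xk /state iterS -/(state e eps x0 k) state_eq /Mmat mul_block_col col_mxKu.
by rewrite mulmxBl mul1mx mul_scalar_mx eD eB eZ eM.
Qed.

Lemma SS k i : Sv k.+1 i 0 = \sum_l L i l * X k l 0 + Sv k i 0
   - 2 * \sum_l L i l * Sv k l 0 - eps * Sv k i 0.
Proof.
rewrite {1}/sk /state iterS -/(state e eps x0 k) state_eq /Mmat mul_block_col col_mxKd.
rewrite S_eq [(_ - eps%:M) *m _]mulmxBl [(1%:M - _) *m _]mulmxBl mul1mx mul_scalar_mx -scalemxAl.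
rewrite eD !eB !eZ !eM; ring.
Qed.

Local Notation xa := ((\sum_i x0 i 0) / n%:R).
Definition y k i := X k i 0 - xa.

Lemma Ly k i : \sum_l L i l * y k l = \sum_l L i l * X k l 0.
Proof.
rewrite /y; under eq_bigr do rewrite mulrBr.
by rewrite sumrB -mulr_suml rsum mul0r subr0.
Qed.

Lemma yS k i : y k.+1 i = y k i - \sum_l L i l * y k l + eps * Sv k i 0.
Proof. rewrite Ly {1}/y XS /y; ring. Qed.

Lemma SS' k i : Sv k.+1 i 0 = \sum_l L i l * y k l + Sv k i 0
   - 2 * \sum_l L i l * Sv k l 0 - eps * Sv k i 0.
Proof. by rewrite Ly SS. Qed.

Lemma eig_swap (c : 'I_n -> R) (p : R) (f : 'I_n -> R) :
  (forall i, \sum_k c k * L k i = p * c i) ->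
  \sum_i c i * \sum_l L i l * f l = p * \sum_l c l * f l.
Proof.
move=> h.
under eq_bigr do rewrite mulr_sumr.
rewrite exchange_big mulr_sumr /=; apply: eq_bigr => l _.
transitivity ((\sum_i c i * L i l) * f l).
  by rewrite mulr_suml; apply: eq_bigr => i _; ring.
by rewrite h mulrA.
Qed.

Definition Wm (c : 'I_n -> R) k := \sum_i c i * y k i.
Definition Tm (c : 'I_n -> R) k := \sum_i c i * Sv k i 0.

Lemma WS c p k : (forall i, \sum_k c k * L k i = p * c i) ->
  Wm c k.+1 = (1 - p) * Wm c k + eps * Tm c k.
Proof.
move=> h; rewrite /Wm /Tm.
under eq_bigr do rewrite yS.
transitivity (\sum_i c i * y k i - \sum_i c i * \sum_l L i l * y k l
              + eps * \sum_i c i * Sv k i 0).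
  by rewrite mulr_sumr -sumrB -big_split /=; apply: eq_bigr => i _; ring.
rewrite (eig_swap _ _ _ h); ring.
Qed.

Lemma TS c p k : (forall i, \sum_k c k * L k i = p * c i) ->
  Tm c k.+1 = p * Wm c k + (1 - 2 * p - eps) * Tm c k.
Proof.
move=> h; rewrite /Wm /Tm.
under eq_bigr do rewrite SS'.
transitivity (\sum_i c i * \sum_l L i l * y k l + \sum_i c i * Sv k i 0
              - 2 * \sum_i c i * \sum_l L i l * Sv k l 0 - eps * \sum_i c i * Sv k i 0).
  rewrite 2!mulr_sumr -big_split -!sumrB /=.
  by apply: eq_bigr => i _; ring.
rewrite !(eig_swap _ _ _ h); ring.
Qed.

Lemma T0 c : Tm c 0 = 0.
Proof. by rewrite /Tm big1 // => i _; rewrite S0 mxE mulr0. Qed.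

Lemma W0const c : (forall i j, c i = c j) -> Wm c 0 = 0.
Proof.
move=> hc; have n0 : (0 < n)%N by apply: ltnW.
pose i0 : 'I_n := Ordinal n0.
rewrite /Wm (eq_bigr (fun i => c i0 * y 0 i)); last by move=> i _; rewrite (hc i i0).
rewrite -mulr_sumr /y X0 sumrB sumr_const card_ord.
have nn : (n%:R : R) != 0 by rewrite pnatr_eq0 -lt0n.
by rewrite -[(_ / _) *+ n]mulr_natr divfK // subrr mulr0.
Qed.

Lemma ninv_le : (n%:R^-1 : R) <= 2^-1.
Proof.
rewrite lef_pV2 ?posrE ?ltr0n ?ler_nat //; exact: ltnW.
Qed.

Lemma mode_W c p : (forall i, \sum_k c k * L k i = p * c i) ->
  0 <= p -> p <= n%:R^-1 -> (p = 0 -> forall i j, c i = c j) ->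
  (fun k => Wm c k) @ \oo --> (0 : R).
Proof.
move=> h p0 pn pc.
case: (eqVneq p 0) => [pz|pnz].
  have z : forall k, Wm c k = 0 /\ Tm c k = 0.
    elim=> [|k [IHw IHt]]; first by rewrite T0 (W0const _ (pc pz)).
    by rewrite (WS _ _ _ h) (TS _ _ _ h) IHw IHt pz; split; ring.
  have -> : (fun k => Wm c k) = (fun=> 0) by apply: funext => k; case: (z k).
  exact: cvg_cst.
have pp : 0 < p by rewrite lt_neqAle eq_sym pnz.
have ni := ninv_le.
have hb : eps < (1 - p) * (2 - p).
  have : 0 <= (n%:R^-1 - p) * (3 - p - n%:R^-1) by apply: mulr_ge0; lra.
  move: epsb; set ni' := (n%:R^-1 : R) => e1 e2; nra.
have [] := @mode_cvg R p eps (Wm c) (Tm c) pp (le_trans pn ni) eps0 hb.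
- by move=> k; rewrite (WS _ _ _ h).
- by move=> k; rewrite (TS _ _ _ h).
by [].
Qed.

Lemma mode_T c p : (forall i, \sum_k c k * L k i = p * c i) ->
  0 <= p -> p <= n%:R^-1 -> (p = 0 -> forall i j, c i = c j) ->
  (fun k => Tm c k) @ \oo --> (0 : R).
Proof.
move=> h p0 pn pc.
case: (eqVneq p 0) => [pz|pnz].
  have z : forall k, Wm c k = 0 /\ Tm c k = 0.
    elim=> [|k [IHw IHt]]; first by rewrite T0 (W0const _ (pc pz)).
    by rewrite (WS _ _ _ h) (TS _ _ _ h) IHw IHt pz; split; ring.
  have -> : (fun k => Tm c k) = (fun=> 0) by apply: funext => k; case: (z k).
  exact: cvg_cst.
have pp : 0 < p by rewrite lt_neqAle eq_sym pnz.
have ni := ninv_le.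
have hb : eps < (1 - p) * (2 - p).
  have : 0 <= (n%:R^-1 - p) * (3 - p - n%:R^-1) by apply: mulr_ge0; lra.
  move: epsb; set ni' := (n%:R^-1 : R) => e1 e2; nra.
have [] := @mode_cvg R p eps (Wm c) (Tm c) pp (le_trans pn ni) eps0 hb.
- by move=> k; rewrite (WS _ _ _ h).
- by move=> k; rewrite (TS _ _ _ h).
by [].
Qed.

Lemma cvg_sum0 (F : 'I_n -> nat -> R) :
  (forall j, (fun k => F j k) @ \oo --> (0:R)) ->
  (fun k => \sum_j F j k) @ \oo --> (0:R).
Proof.
move=> H.
have := @cvg_big R 'I_n +%R 0 predT add_continuous nat \oo (index_enum 'I_n)
  F (fun=> 0) _ (fun j _ => H j).
move=> /(_ _) h; have := h _; rewrite big1 //; exact.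
Qed.

Lemma modes_facts :
  exists (a b : 'M[R]_n) (p : 'I_n -> R),
  [/\ forall j i, \sum_k a j k * L k i = p j * a j i,
      forall j i, \sum_k b j k * L k i = p j * b j i,
      forall j, 0 <= p j /\ p j <= n%:R^-1,
      forall j, p j = 0 -> (forall i l, a j i = a j l) /\ (forall i l, b j i = b j l) &
      forall i l, \sum_j (a j i * a j l + b j i * b j l) = (i == l)%:R].
Proof.
have [a [b [p [q [h1 h2 h3 h4]]]]] := @real_spectral R n L Lsym.
have hq : forall j, q j = 0.
  move=> j.
  have N : \sum_i a j i ^+ 2 + \sum_i b j i ^+ 2 = 1 by rewrite -big_split; exact: h3 j.
  have Bab : bilL (fun i => a j i) (fun i => b j i)
             = p j * \sum_i b j i * a j i - q j * \sum_i b j i ^+ 2.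
    rewrite /bil; under eq_bigr do rewrite h1.
    by rewrite 2!mulr_sumr -sumrB; apply: eq_bigr => i _; ring.
  have Bba : bilL (fun i => b j i) (fun i => a j i)
             = q j * \sum_i a j i ^+ 2 + p j * \sum_i b j i * a j i.
    rewrite /bil; under eq_bigr do rewrite h2.
    by rewrite 2!mulr_sumr -big_split; apply: eq_bigr => i _ /=; ring.
  have := bilsym (fun i => a j i) (fun i => b j i); rewrite Bab Bba => E.
  have : q j * (\sum_i a j i ^+ 2 + \sum_i b j i ^+ 2) = 0 by rewrite mulrDr; lra.
  by rewrite N mulr1.
have h1' : forall j i, \sum_k a j k * L k i = p j * a j i.
  by move=> j i; rewrite h1 hq mul0r subr0.
have h2' : forall j i, \sum_k b j k * L k i = p j * b j i.
  by move=> j i; rewrite h2 hq mul0r add0r.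
have Baa : forall j, bilL (fun i => a j i) (fun i => a j i) = p j * \sum_i a j i ^+ 2.
  move=> j; rewrite /bil; under eq_bigr do rewrite h1'.
  by rewrite mulr_sumr; apply: eq_bigr => i _; ring.
have Bbb : forall j, bilL (fun i => b j i) (fun i => b j i) = p j * \sum_i b j i ^+ 2.
  move=> j; rewrite /bil; under eq_bigr do rewrite h2'.
  by rewrite mulr_sumr; apply: eq_bigr => i _; ring.
have Pj : forall j, p j = bilL (fun i => a j i) (fun i => a j i)
                          + bilL (fun i => b j i) (fun i => b j i).
  move=> j; rewrite Baa Bbb -mulrDr -big_split /= h3 mulr1 //.
exists a, b, p; split => //.
- move=> j; have ga := qfge0 (fun i => a j i); have gb := qfge0 (fun i => b j i).
  have la := qfle (fun i => a j i); have lb := qfle (fun i => b j i).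
  have N := h3 j; rewrite big_split /= in N.
  rewrite Pj; split; first lra.
  move: la lb.
  set ni := (n%:R^-1 : R); set sa := \sum_i _; set sb := \sum_i _ => la lb.
  have : ni * sa + ni * sb = ni by rewrite -mulrDr N mulr1.
  lra.
- move=> j pz; have ga := qfge0 (fun i => a j i); have gb := qfge0 (fun i => b j i).
  have := Pj j; rewrite pz => E.
  split; apply: qf0; lra.
Qed.

Lemma recon (a b : 'M[R]_n) (f : 'I_n -> R) :
  (forall i l, \sum_j (a j i * a j l + b j i * b j l) = (i == l)%:R) ->
  forall i, f i = \sum_j ((\sum_l a j l * f l) * a j i + (\sum_l b j l * f l) * b j i).
Proof.
move=> h4 i.
transitivity (\sum_j \sum_l (a j i * a j l + b j i * b j l) * f l); last first.
  apply: eq_bigr => j _; rewrite !mulr_suml -big_split /=.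
  by apply: eq_bigr => l _; ring.
rewrite exchange_big /=.
under eq_bigr do rewrite -mulr_suml h4.
by rewrite (@sum_delta R n i f).
Qed.

Lemma conv i : (fun k => X k i 0) @ \oo --> xa /\ (fun k => Sv k i 0) @ \oo --> (0:R).
Proof.
have [a [b [p [h1 h2 hp hc h4]]]] := modes_facts.
have Wa : forall j, (fun k => Wm (fun l => a j l) k) @ \oo --> (0:R).
  by move=> j; apply: (mode_W (fun l => a j l) (p j) (h1 j)); [exact: (hp j).1 | exact: (hp j).2 | move=> pz; exact: (hc j pz).1].
have Wb : forall j, (fun k => Wm (fun l => b j l) k) @ \oo --> (0:R).
  by move=> j; apply: (mode_W (fun l => b j l) (p j) (h2 j)); [exact: (hp j).1 | exact: (hp j).2 | move=> pz; exact: (hc j pz).2].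
have Ta : forall j, (fun k => Tm (fun l => a j l) k) @ \oo --> (0:R).
  by move=> j; apply: (mode_T (fun l => a j l) (p j) (h1 j)); [exact: (hp j).1 | exact: (hp j).2 | move=> pz; exact: (hc j pz).1].
have Tb : forall j, (fun k => Tm (fun l => b j l) k) @ \oo --> (0:R).
  by move=> j; apply: (mode_T (fun l => b j l) (p j) (h2 j)); [exact: (hp j).1 | exact: (hp j).2 | move=> pz; exact: (hc j pz).2].
split.
- have -> : (fun k => X k i 0) = (fun k => xa + \sum_j (Wm (fun l => a j l) k * a j i
                                               + Wm (fun l => b j l) k * b j i)).
    apply: funext => k; rewrite /Wm -(recon _ _ (y k) h4 i) /y; ring.
  rewrite -[Z in _ --> Z]addr0; apply: cvgD; first exact: cvg_cst.
  apply: cvg_sum0 => j.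
  have -> : (0:R) = 0 * a j i + 0 * b j i by rewrite !mul0r addr0.
  by apply: cvgD; apply: cvgMl; [exact: Wa | exact: Wb].
- have -> : (fun k => Sv k i 0) = (fun k => \sum_j (Tm (fun l => a j l) k * a j i
                                               + Tm (fun l => b j l) k * b j i)).
    by apply: funext => k; rewrite /Tm -(recon _ _ (fun l => Sv k l 0) h4 i).
  apply: cvg_sum0 => j.
  have -> : (0:R) = 0 * a j i + 0 * b j i by rewrite !mul0r addr0.
  by apply: cvgD; apply: cvgMl; [exact: Ta | exact: Tb].
Qed.

End Main.

Theorem proposition4 (R : realType) (n : nat) (e : rel 'I_n) (eps : R) :
  (1 < n)%N ->
  no_selfloops e -> symmetric_graph e -> strongly_connected e ->
  0 < eps -> eps < (1 - n%:R^-1) * (2 - n%:R^-1) ->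
  average_consensus e eps.
Proof.
move=> n1 _ sym conn e0 eb x0 xa i.
exact: (@conv R n e eps n1 sym conn e0 eb x0 i).
Qed.
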